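(* Let $N$ be an odd prime, $V=\mathbb{Z}_N\times\mathbb{Z}_N$, and let $H$ be the channel operator $H(S)[n]=\sum_{k=1}^r\alpha_k\,e(\omega_k n)\,S[n-\tau_k]$ with $\alpha_k\in\mathbb{C}$, $\sum_k|\alpha_k|^2\le 1$, $(\tau_k,\omega_k)\in V$, and $\mathrm{supp}(H)=\{(\tau_k,\omega_k):k=1,\dots,r\}$. Let $L\neq M$ be two lines in $V$ such that $H$ is generic with respect to both $L$ and $M$. Let $C_L\in\mathcal{B}_L$, $C_M\in\mathcal{B}_M$ be chirps with associated characters $\psi_L:L\to\mathbb{C}^*$, $\psi_M:M\to\mathbb{C}^*$, i.e. $\pi(l)C_L=\psi_L(l)C_L$ for all $l\in L$ and $\pi(m)C_M=\psi_M(m)C_M$ for all $m\in M$. Define $h:L\times M\to\mathbb{C}$ by $$h(l,m)=\mathcal{A}(C_L,H(C_L))[m]\cdot\psi_L(l)-\mathcal{A}(C_M,H(C_M))[l]\cdot e(\Omega[l,m])\cdot\psi_M(m),$$ where $\Omega[(\tau,\omega),(\tau',\omega')]=\tau\omega'-\omega\tau'\in\mathbb{Z}_N$. If $l\in L$, $m\in M$ and $l+m\in\mathrm{supp}(H)$, then $h(l,m)=0$.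
   Context: $\mathcal{H}$ is the space of functions $\mathbb{Z}_N\to\mathbb{C}$ with inner product $\langle f,g\rangle=\sum_{n}f[n]\overline{g[n]}$; $e(t)=\exp(2\pi i t/N)$; $2^{-1}=(N+1)/2$. Heisenberg operators: $[\pi(\tau,\omega)f][n]=e(-2^{-1}\tau\omega)e(\omega n)f[n-\tau]$; ambiguity function: $\mathcal{A}(f,g)[\tau,\omega]=\langle\pi(\tau,\omega)f,g\rangle$. Lines in $V$: $L_a=\{(\tau,a\tau)\}$ ($a\in\mathbb{Z}_N$) and $L_\infty=\{(0,\omega)\}$. Chirp bases: $\mathcal{B}_{L_a}=\{C_{L_a,b}:b\in\mathbb{Z}_N\}$ with $C_{L_a,b}[n]=e(2^{-1}an^2-bn)/\sqrt{N}$, satisfying $\pi(\tau,a\tau)C_{L_a,b}=e(b\tau)C_{L_a,b}$; and $\mathcal{B}_{L_\infty}=\{\delta_b:b\in\mathbb{Z}_N\}$, satisfying $\pi(0,\omega)\delta_b=e(b\omega)\delta_b$. $H$ is generic with respect to a line $L$ if $u-v\notin L$ for all distinct $u,v\in\mathrm{supp}(H)$. *)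

(* Defs.v *)
From HB Require Import structures.
From mathcomp Require Import all_boot all_order all_algebra.
From mathcomp Require Import reals trigo.
From mathcomp Require Import complex.
Set Implicit Arguments. Unset Strict Implicit. Unset Printing Implicit Defensive.
Import Order.TTheory GRing.Theory Num.Theory.
Local Open Scope ring_scope.
Local Open Scope complex_scope.

Section Heisenberg.
Variables (R : realType) (N : nat).

Definition V := ('Z_N * 'Z_N)%type.
Definition vadd (u v : V) : V := (u.1 + v.1, u.2 + v.2).
Definition vsub (u v : V) : V := (u.1 - v.1, u.2 - v.2).

(* e(t) = exp(2 pi i t / N), t read as its representative in [0, N) *)
Definition eN (t : 'Z_N) : R[i] :=
  (cos (2 * pi * (nat_of_ord t)%:R / N%:R)) +i* (sin (2 * pi * (nat_of_ord t)%:R / N%:R)).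

(* 2^{-1} = (N+1)/2 in Z_N *)
Definition half : 'Z_N := ((N.+1)./2)%:R.

Definition hpi (u : V) (f : 'Z_N -> R[i]) : 'Z_N -> R[i] :=
  fun n => eN (- (half * u.1 * u.2)) * eN (u.2 * n) * f (n - u.1).

Definition inner (f g : 'Z_N -> R[i]) : R[i] := \sum_(n : 'Z_N) f n * (g n)^*.

Definition ambiguity (f g : 'Z_N -> R[i]) (u : V) : R[i] := inner (hpi u f) g.

Definition Omega (u v : V) : 'Z_N := u.1 * v.2 - u.2 * v.1.

(* lines through the origin: L_a = {(t, a t)} and L_oo = {(0, w)} *)
Inductive line := Lslope of 'Z_N | Linf.

Definition on_line (L : line) (u : V) : bool :=
  match L with
  | Lslope a => u.2 == a * u.1
  | Linf => u.1 == 0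
  end.

Definition chirp (L : line) (b : 'Z_N) : 'Z_N -> R[i] :=
  match L with
  | Lslope a => fun n => eN (half * a * n * n - b * n) / (Num.sqrt (N%:R : R))%:C
  | Linf => fun n => if n == b then 1 else 0
  end.

Definition in_chirp_basis (L : line) (C : 'Z_N -> R[i]) : Prop :=
  exists b : 'Z_N, C = chirp L b.

Definition channel (r : nat) (alpha : 'I_r -> R[i]) (pts : 'I_r -> V)
  (S : 'Z_N -> R[i]) : 'Z_N -> R[i] :=
  fun n => \sum_(k < r) alpha k * eN ((pts k).2 * n) * S (n - (pts k).1).

Definition in_supp (r : nat) (pts : 'I_r -> V) (u : V) : Prop :=
  exists k : 'I_r, pts k = u.

Definition generic (r : nat) (pts : 'I_r -> V) (L : line) : Prop :=
  forall u v : V, in_supp pts u -> in_supp pts v -> u <> v -> ~~ on_line L (vsub u v).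

Definition hfun (r : nat) (alpha : 'I_r -> R[i]) (pts : 'I_r -> V)
  (CL CM : 'Z_N -> R[i]) (psiL psiM : V -> R[i]) (l m : V) : R[i] :=
  ambiguity CL (channel alpha pts CL) m * psiL l
  - ambiguity CM (channel alpha pts CM) l * eN (Omega l m) * psiM m.

End Heisenberg.

(* Main.v *)
Require Import Defs.
From HB Require Import structures.
From mathcomp Require Import all_boot all_order all_algebra.
From mathcomp Require Import reals trigo.
From mathcomp Require Import complex.
From mathcomp Require Import ring lra.
Import Order.TTheory GRing.Theory Num.Theory.
Local Open Scope ring_scope.

Section S.
Local Open Scope complex_scope.
Variable R : realType.
Definition E (x : R) : R[i] := cos x +i* sin x.
Lemma ED x y : E (x + y) = E x * E y.
Proof. rewrite /E cosD sinD. apply/eqP; rewrite eq_complex. simpl.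
apply/andP; split; apply/eqP; [reflexivity| exact: addrC]. Qed.
Lemma Econj x : conjc (E x) = E (-x).
Proof. rewrite /E cosN sinN. reflexivity. Qed.
Lemma E0 : E 0 = 1.
Proof. rewrite /E cos0 sin0. reflexivity. Qed.
Lemma E2pi (q : nat) : E (2 * pi * q%:R) = 1.
Proof.
have h : (2 * pi * q%:R = 0 + (pi *+ 2) *+ q :> R)%R.
  by rewrite add0r -mulrnA -[pi *+ _]mulr_natr natrM; ring.
rewrite [X in E X]h.
rewrite /E (periodicn (@cosD2pi R)) (periodicn (@sinD2pi R)) cos0 sin0. reflexivity.
Qed.
Lemma Emod (x p : nat) : (0 < p)%N -> E (2 * pi * (x %% p)%:R / p%:R) = E (2 * pi * x%:R / p%:R).
Proof.
move=> hp; rewrite {2}(divn_eq x p) natrD natrM.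
have hp' : (p%:R : R) != 0 by rewrite pnatr_eq0 -lt0n.
have h : (2 * pi * ((x %/ p)%:R * p%:R + (x %% p)%:R) / p%:R
   = 2 * pi * (x %% p)%:R / p%:R + 2 * pi * (x %/ p)%:R :> R)%R by field.
by rewrite [X in _ = E X]h ED E2pi mulr1.
Qed.
Variable N : nat.
Hypothesis hN : (1 < N)%N.
Local Notation ee := (@eN R N).
Lemma eNE (t : 'Z_N) : ee t = E (2 * pi * (nat_of_ord t)%:R / N%:R).
Proof. reflexivity. Qed.
Lemma eN_add (a b : 'Z_N) : ee (a + b) = ee a * ee b.
Proof.
rewrite !eNE.
have -> : nat_of_ord (a + b) = ((nat_of_ord a + nat_of_ord b) %% N)%N.
  have hN' : N = (Zp_trunc N).+2 by rewrite Zp_cast.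
  rewrite [X in (_ %% X)%N]hN'. reflexivity.
rewrite Emod; last by apply: ltn_trans hN.
rewrite -ED natrD. congr E. ring.
Qed.
Lemma eN0 : ee 0 = 1.
Proof. by rewrite eNE /= mulr0 mul0r E0. Qed.
Lemma eN_conj (a : 'Z_N) : conjc (ee a) = ee (- a).
Proof.
have h1 : conjc (ee a) * ee a = 1 by rewrite !eNE Econj -ED addNr E0.
have h2 : ee (- a) * ee a = 1 by rewrite -eN_add addNr eN0.
have h3 : ee a * ee (- a) = 1 by rewrite mulrC.
by rewrite -[LHS]mulr1 -h3 mulrA h1 mul1r.
Qed.
Lemma eN_norm (a : 'Z_N) : ee a * conjc (ee a) = 1.
Proof. by rewrite eN_conj -eN_add subrr eN0. Qed.
Lemma E_eq1 (t : R) : 0 < t < 2 -> E (pi * t) = 1 -> False.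
Proof.
move=> /andP[t0 t2] /eqP; rewrite eq_complex /= => /andP[/eqP hc /eqP hs].
have pi0 : 0 < pi :> R by exact: pi_gt0.
case: (ltgtP t 1) => ht; last first.
  move: hc; rewrite ht mulr1 -[pi]add0r cosDpi cos0 => /eqP.
  by rewrite eq_sym -addr_eq0 (paddr_eq0 ler01 ler01) oner_eq0.
- have : 0 < sin (pi * t - pi).
    apply: sin_gt0_pi; rewrite subr_gt0 -[X in X < _]mulr1 ltr_pM2l // ht /=.
    by rewrite ltrBlDr -mulr2n -[pi *+ 2]mulr_natr ltr_pM2l.
  have -> : sin (pi * t - pi) = - sin (pi * t).
    by rewrite -[pi * t in RHS](subrK pi) sinDpi opprK.
  by rewrite hs oppr0 ltxx.
- have : 0 < sin (pi * t).
    apply: sin_gt0_pi; rewrite mulr_gt0 //=.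
    by rewrite -[X in _ < X]mulr1 ltr_pM2l.
  by rewrite hs ltxx.
Qed.
Lemma eN_eq1 (c : 'Z_N) : ee c = 1 -> c = 0.
Proof.
move=> h; apply/eqP; apply: contraT => hc; exfalso.
have hc0 : (0 < nat_of_ord c)%N by rewrite lt0n; apply: contra hc => /eqP hc'; apply/eqP; apply: val_inj.
have hcN : (nat_of_ord c < N)%N by case: (c) => /= x; rewrite Zp_cast.
have N0 : (0 : R) < N%:R by rewrite ltr0n; apply: ltn_trans hN.
have ht : pi * (2 * (nat_of_ord c)%:R / N%:R) = 2 * pi * (nat_of_ord c)%:R / N%:R :> R by ring.
move: h; rewrite eNE -ht; apply: E_eq1; apply/andP; split.
  by rewrite divr_gt0 // mulr_gt0 // ltr0n.
by rewrite ltr_pdivrMr // ltr_pM2l // ltr_nat.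
Qed.
Hypothesis hNodd : odd N.
Local Notation hf := (@Defs.half N).
Local Notation VV := (V N).
Local Notation FF := ('Z_N -> R[i]).

Lemma h2 : hf + hf = 1.
Proof.
rewrite /Defs.half -natrD addnn halfK /= hNodd /= subn0 -[N.+1]addn1 natrD pchar_Zp //.
by rewrite add0r.
Qed.

Lemma eN_inv (x : 'Z_N) : ee x * ee (- x) = 1.
Proof. by rewrite -eN_add subrr eN0. Qed.

Lemma comb4 a b c d e g h (z z' : R[i]) : a + b + (c + d) = e + (g + h) -> z = z' ->
  ee a * ee b * (ee c * ee d * z) = ee e * (ee g * ee h * z').
Proof.
move=> H <-.
have -> : ee a * ee b * (ee c * ee d * z) = ee a * ee b * (ee c * ee d) * z by ring.
have -> : ee e * (ee g * ee h * z) = ee e * (ee g * ee h) * z by ring.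
by rewrite -!eN_add H.
Qed.

Lemma hpiM (u v : VV) (f : FF) n :
  hpi u (hpi v f) n = ee (- (hf * Omega u v)) * hpi (vadd u v) f n.
Proof.
rewrite /hpi /vadd /Omega /=. apply: comb4.
  apply/eqP; rewrite -subr_eq0.
  have -> : - (hf * u.1 * u.2) + u.2 * n + (- (hf * v.1 * v.2) + v.2 * (n - u.1))
    - (- (hf * (u.1 * v.2 - u.2 * v.1)) + (- (hf * (u.1 + v.1) * (u.2 + v.2)) + (u.2 + v.2) * n))
    = (hf + hf - 1) * (u.1 * v.2) by ring.
  by rewrite h2 subrr mul0r.
by congr f; ring.
Qed.

Lemma hpi0 (f : FF) n : hpi (0, 0) f n = f n.
Proof. by rewrite /hpi /= !mulr0 oppr0 mul0r eN0 !mul1r addr0. Qed.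

Lemma hpi_ext (u : VV) (f g : FF) : f =1 g -> forall n, hpi u f n = hpi u g n.
Proof. by move=> H n; rewrite /hpi H. Qed.

Lemma hpi_scale (u : VV) c (f : FF) n : hpi u (fun m => c * f m) n = c * hpi u f n.
Proof. rewrite /hpi; ring. Qed.

Lemma inner_ext (f f' g g' : FF) : f =1 f' -> g =1 g' -> inner f g = inner f' g'.
Proof. by move=> H1 H2; apply: eq_bigr => n _; rewrite H1 H2. Qed.

Lemma inner_sl c (f g : FF) : inner (fun n => c * f n) g = c * inner f g.
Proof. by rewrite /inner mulr_sumr; apply: eq_bigr => n _; rewrite mulrA. Qed.

Lemma inner_sr c (f g : FF) : inner f (fun n => c * g n) = conjc c * inner f g.
Proof. by rewrite /inner mulr_sumr; apply: eq_bigr => n _; rewrite rmorphM /=; ring. Qed.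

Lemma inner_sum r (f : FF) (G : 'I_r -> FF) :
  inner f (fun n => \sum_(k < r) G k n) = \sum_(k < r) inner f (G k).
Proof.
rewrite /inner exchange_big /=; apply: eq_bigr => n _.
by rewrite rmorph_sum mulr_sumr.
Qed.

Lemma hpi_unit (u : VV) (f g : FF) : inner (hpi u f) (hpi u g) = inner f g.
Proof.
rewrite /inner [RHS](reindex_inj (addIr (- u.1))) /=.
apply: eq_bigr => n _; rewrite /hpi !rmorphM /=.
set a := ee _; set b := ee _.
transitivity ((a * conjc a) * (b * conjc b) * (f (n - u.1) * conjc (g (n - u.1)))); first by ring.
by rewrite /a /b !eN_norm !mul1r.
Qed.
Definition vneg (x : VV) : VV := (- x.1, - x.2).

Lemma on_lineD (L : line N) x y : on_line L x -> on_line L y -> on_line L (vadd x y).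
Proof.
case: L => [a|] /= /eqP hx /eqP hy; apply/eqP.
  by rewrite hx hy mulrDr.
by rewrite hx hy addr0.
Qed.

Lemma on_lineN (L : line N) x : on_line L x -> on_line L (vneg x).
Proof.
case: L => [a|] /= /eqP hx; apply/eqP.
  by rewrite hx mulrN.
by rewrite hx oppr0.
Qed.

Lemma line_witness (L : line N) u : ~~ on_line L u -> exists l, on_line L l /\ Omega l u != 0.
Proof.
case: L => [a|] /= hu.
  exists (1, a); split; first by rewrite /= mulr1.
  by rewrite /Omega /= mul1r subr_eq0.
exists (0, 1); split; first by [].
by rewrite /Omega /= mul0r mul1r sub0r oppr_eq0.
Qed.

Lemma channel_hpi r (alpha : 'I_r -> R[i]) (pts : 'I_r -> VV) (S : FF) n :
  channel alpha pts S n =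
  \sum_(k < r) (alpha k * ee (hf * (pts k).1 * (pts k).2)) * hpi (pts k) S n.
Proof.
apply: eq_bigr => k _; rewrite /hpi.
set x := hf * _ * _.
transitivity (alpha k * (ee x * ee (- x)) * ee ((pts k).2 * n) * S (n - (pts k).1)).
  by rewrite eN_inv mulr1.
ring.
Qed.

Lemma hpi_adj (b w : VV) (f g : FF) :
  inner (hpi b f) (hpi w g) = ee (- (hf * Omega (vneg w) b)) * inner (hpi (vsub b w) f) g.
Proof.
rewrite -(hpi_unit (vneg w)) -inner_sl; apply: inner_ext => n.
  rewrite hpiM; congr (_ * _); congr (hpi _ f n).
  by rewrite /vadd /vsub /vneg /=; congr (_, _); ring.
rewrite hpiM.
have -> : Omega (vneg w) w = 0 by rewrite /Omega /vneg /=; ring.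
have -> : vadd (vneg w) w = (0, 0) by rewrite /vadd /vneg /= !addNr.
by rewrite mulr0 oppr0 eN0 mul1r hpi0.
Qed.
Section Eig.
Variables (L : line N) (C : FF) (psi : VV -> R[i]).
Hypothesis hpsi : forall l : VV, on_line L l -> hpi l C = (fun n => psi l * C n).
Hypothesis hnorm : inner C C = 1.

Lemma psi_norm l : on_line L l -> psi l * conjc (psi l) = 1.
Proof.
move=> hl; have := hpi_unit l C C.
by rewrite hpsi // inner_sl inner_sr hnorm mulr1 mulrC.
Qed.

Lemma ortho u : ~~ on_line L u -> inner (hpi u C) C = 0.
Proof.
move=> hu; have [l [hl hO]] : exists l : VV, on_line L l /\ Omega l u != 0 by apply: line_witness.
set X := inner (hpi u C) C.
set c := ee (- Omega l u).
have hc : c != 1 by apply: contra hO => /eqP /eN_eq1 /eqP; rewrite oppr_eq0.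
have HX : X = c * X.
  rewrite {1}/X -(hpi_unit l) (hpsi _ hl).
  have -> : inner (hpi l (hpi u C)) (fun n => psi l * C n)
     = inner (fun n => c * (psi l * hpi u C n)) (fun n => psi l * C n).
    apply: inner_ext => // n.
    rewrite hpiM.
    have H1 : hpi u (hpi l C) n = ee (- (hf * Omega u l)) * hpi (vadd u l) C n by rewrite hpiM.
    rewrite (hpsi _ hl) hpi_scale in H1.
    have -> : vadd l u = vadd u l by rewrite /vadd /=; congr (_, _); ring.
    have H2 : hpi (vadd u l) C n = ee (hf * Omega u l) * (psi l * hpi u C n).
      by rewrite H1 mulrA -eN_add addrN eN0 mul1r.
    rewrite H2 mulrA -eN_add /c; congr (ee _ * _).
    apply/eqP; rewrite -subr_eq0.
    have -> : - (hf * Omega l u) + hf * Omega u l - - Omega l u = (1 - (hf + hf)) * Omega l u.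
      by rewrite /Omega; ring.
    by rewrite h2 subrr mul0r.
  rewrite inner_sl inner_sl inner_sr -/X.
  have -> : c * (psi l * (conjc (psi l) * X)) = c * (psi l * conjc (psi l)) * X by ring.
  by rewrite psi_norm // mulr1.
have : (1 - c) * X = 0 by rewrite mulrBl mul1r -HX subrr.
move/eqP; rewrite mulf_eq0 subr_eq0 eq_sym (negbTE hc) /=.
by move/eqP.
Qed.

Definition Bsum {r} (alpha : 'I_r -> R[i]) (pts : 'I_r -> VV) (v : VV) :=
  \sum_(k < r) (if pts k == v then conjc (alpha k * ee (hf * (pts k).1 * (pts k).2)) else 0).

Lemma key r (alpha : 'I_r -> R[i]) (pts : 'I_r -> VV) (hgen : generic pts L)
  (a b : VV) (ha : on_line L a) (hv : in_supp pts (vadd b a)) :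
  inner (hpi b C) (channel alpha pts C) * psi a
  = Bsum alpha pts (vadd b a) * ee (- (hf * Omega b a)).
Proof.
set v := vadd b a.
set I := inner (hpi b C) (hpi v C).
have step1 : inner (hpi b C) (channel alpha pts C) = Bsum alpha pts v * I.
  rewrite (@inner_ext _ (hpi b C) _
     (fun n => \sum_(k < r) (alpha k * ee (hf * (pts k).1 * (pts k).2)) * hpi (pts k) C n)) //;
    last by move=> n; rewrite channel_hpi.
  rewrite inner_sum /Bsum mulr_suml; apply: eq_bigr => k _.
  rewrite inner_sr; case: eqP => [->|hk]; first by [].
  rewrite hpi_adj ortho ?mulr0 ?mul0r //.
  have hg : ~~ on_line L (vsub (pts k) v) by apply: hgen => //; exists k.
  apply: contra hg => h.
  have -> : vsub (pts k) v = vneg (vadd (vsub b (pts k)) a).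
    by rewrite /vsub /vneg /vadd /v /=; congr (_, _); ring.
  by apply: on_lineN; apply: on_lineD.
have H : forall n, hpi v C n = ee (hf * Omega b a) * (psi a * hpi b C n).
  move=> n; have := hpiM b a C n.
  rewrite (hpsi _ ha) hpi_scale => ->.
  by rewrite mulrA -eN_add addrN eN0 mul1r.
have step2 : I = ee (- (hf * Omega b a)) * conjc (psi a).
  rewrite /I (@inner_ext _ (hpi b C) _ (fun n => ee (hf * Omega b a) * (psi a * hpi b C n))) //.
  by rewrite !inner_sr hpi_unit hnorm mulr1 eN_conj.
rewrite step1 step2.
have -> : Bsum alpha pts v * (ee (- (hf * Omega b a)) * conjc (psi a)) * psi a
  = Bsum alpha pts v * ee (- (hf * Omega b a)) * (psi a * conjc (psi a)) by ring.
by rewrite psi_norm // mulr1.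
Qed.
End Eig.

Lemma chirp_norm (L : line N) (C : FF) : in_chirp_basis L C -> inner C C = 1.
Proof.
case=> b ->; case: L => [a|] /=; rewrite /inner.
  set s := ((Num.sqrt (N%:R : R))%:C : R[i]).
  have hs : s * s = N%:R.
    by rewrite /s -rmorphM /= -expr2 sqr_sqrtr ?ler0n // rmorph_nat.
  have hN0 : (N%:R : R[i]) != 0 by rewrite pnatr_eq0 -lt0n; apply: ltn_trans hN.
  have hs0 : s != 0 by apply: contra hN0 => /eqP hs0; rewrite -hs hs0 mul0r.
  have hsc : conjc s = s by rewrite /s conjc_real.
  transitivity (\sum_(n : 'Z_N) (N%:R : R[i])^-1).
    apply: eq_bigr => n _; rewrite rmorphM /= fmorphV [X in _ * (_ / X)](_ : _ = s); last exact: hsc.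
    set x := ee _.
    transitivity ((x * conjc x) / (s * s)); first by rewrite invfM; ring.
    by rewrite eN_norm hs mul1r.
  by rewrite sumr_const card_ord Zp_cast // -[_ *+ N]mulr_natr mulVf.
rewrite (bigD1 b) //= eqxx rmorph1 mulr1 big1 ?addr0 //.
by move=> n /negbTE ->; rewrite mul0r.
Qed.
End S.


Theorem mainTheorem4 (R : realType) (N : nat) (hNprime : prime N) (hNodd : odd N)
  (r : nat) (alpha : 'I_r -> R[i]) (pts : 'I_r -> V N)
  (halpha : \sum_(k < r) `|alpha k| ^+ 2 <= 1)
  (L M : line N) (hLM : L <> M)
  (hgenL : generic pts L) (hgenM : generic pts M)
  (CL CM : 'Z_N -> R[i]) (hCL : in_chirp_basis L CL) (hCM : in_chirp_basis M CM)
  (psiL psiM : V N -> R[i])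
  (hpsiL : forall l : V N, on_line L l -> hpi l CL = (fun n => psiL l * CL n))
  (hpsiM : forall m : V N, on_line M m -> hpi m CM = (fun n => psiM m * CM n))
  (l m : V N) (hl : on_line L l) (hm : on_line M m)
  (hlm : in_supp pts (vadd l m)) :
  hfun alpha pts CL CM psiL psiM l m = 0.
Proof.
have hN : (1 < N)%N := prime_gt1 hNprime.
have nL := @chirp_norm R N hN L CL hCL.
have nM := @chirp_norm R N hN M CM hCM.
have hvc : vadd m l = vadd l m by rewrite /vadd; congr (_, _); apply: addrC.
have hv1 : in_supp pts (vadd m l) by rewrite hvc.
have kL := @key R N hN hNodd L CL psiL hpsiL nL r alpha pts hgenL l m hl hv1.
have kM := @key R N hN hNodd M CM psiM hpsiM nM r alpha pts hgenM m l hm hlm.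
have hE : - (Defs.half N * Omega m l) = - (Defs.half N * Omega l m) + Omega l m.
  apply/eqP; rewrite -subr_eq0.
  have -> : - (Defs.half N * Omega m l) - (- (Defs.half N * Omega l m) + Omega l m)
    = (Defs.half N + Defs.half N - 1) * Omega l m by rewrite /Omega; ring.
  by rewrite (@h2 N hN hNodd) subrr mul0r.
rewrite /hfun /ambiguity kL -mulrA [eN R _ * psiM m]mulrC mulrA kM hvc hE.
by rewrite (@eN_add R N hN) mulrA subrr.
Qed.
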